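(* Assume $a>2b$. For every self-intersected 6-periodic of type I in the elliptic billiard, the angles $\theta_i'$ between consecutive sides of its outer polygon satisfy $$\sum_{i=1}^6\cos(2\theta_i')=-\frac{2(a^2-4ab+b^2)}{(a-b)^2}=JL-6.$$
   Context: The elliptic billiard is $\mathcal{E}: x^2/a^2+y^2/b^2=1$, $a>b>0$, $c=\sqrt{a^2-b^2}$. An $N$-periodic is a closed billiard trajectory $P_1\dots P_N$ on $\mathcal{E}$ (at each vertex the normal to $\mathcal{E}$ bisects the angle between the incident segments); all segments are tangent to a fixed confocal conic (the caustic), and all closed trajectories tangent to a given caustic form a one-parameter family. Type I self-intersected 6-periodics (existing for $a>2b$) are the 6-periodics tangent to the confocal hyperbola $x^2/a''^2-y^2/b''^2=1$ with $a''=\frac{a^{3/2}\sqrt{a-2b}}{a-b}$, $b''=\frac{b^{3/2}\sqrt{2a-b}}{a-b}$; one member is $P_1=(0,b)$, $P_2=(k_x,k_y)$, $P_3=(k_x,-k_y)$, $P_4=(0,-b)$, $P_5=-P_2$, $P_6=-P_3$ with $k_x=\frac{a\sqrt{a(a-2b)}}{b-a}$, $k_y=\frac{b^2}{b-a}$. The outer polygon has vertices $P_i'$ = intersection of the tangent lines to $\mathcal{E}$ at $P_i$ and $P_{i+1}$; $\theta_i'$ is the angle at $P_i'$ between these two lines (the value of $\cos 2\theta_i'$ does not depend on which of the supplementary angles is chosen). $L=\frac{4(a^2-ab+b^2)}{a-b}$ is the common perimeter and $J=\frac12\nabla f(P_i)\cdot\hat v>0$ is Joachimsthal's constant ($f=x^2/a^2+y^2/b^2$),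 here $J=1/(a-b)$. *)

(* Defs.v *)
From Stdlib Require Import Reals Lra Lia.
Open Scope R_scope.

Definition pt := (R * R)%type.

Definition dot (u v : pt) : R := fst u * fst v + snd u * snd v.
Definition cross (u v : pt) : R := fst u * snd v - snd u * fst v.
Definition vsub (u v : pt) : pt := (fst u - fst v, snd u - snd v).
Definition vnorm (u : pt) : R := sqrt (dot u u).

Definition on_ellipse (a b : R) (p : pt) : Prop :=
  (fst p)^2 / a^2 + (snd p)^2 / b^2 = 1.

Definition grad_f (a b : R) (p : pt) : pt := (2 * fst p / a^2, 2 * snd p / b^2).

Definition ell_tangent (a b : R) (p : pt) : pt := (- snd p / b^2, fst p / a^2).

Definition vtx (P : nat -> pt) (i : nat) : pt := P (i mod 6)%nat.

(* Billiard reflection at vertex i: the normal to the ellipse bisects the angle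
   between the incident segments, i.e. the sum of the unit vectors from P_i
   towards P_{i-1} and towards P_{i+1} is parallel to the normal. *)
Definition reflects (a b : R) (P : nat -> pt) (i : nat) : Prop :=
  let p := vtx P i in
  let u := vsub (vtx P (i + 5)) p in
  let w := vsub (vtx P (i + 1)) p in
  cross (fst u / vnorm u + fst w / vnorm w, snd u / vnorm u + snd w / vnorm w)
        (grad_f a b p) = 0.

(* the line through p q (p <> q) is tangent to the hyperbola
   x^2/A^2 - y^2/B^2 = 1: it touches the hyperbola at some point X, with
   direction q - p orthogonal to the hyperbola's normal at X *)
Definition tangent_to_hyperbola (A B : R) (p q : pt) : Prop :=
  exists X : pt,
    (fst X)^2 / A^2 - (snd X)^2 / B^2 = 1 /\
    cross (vsub q p) (vsub X p) = 0 /\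
    dot (vsub q p) (fst X / A^2, - snd X / B^2) = 0.

(* the caustic of type I self-intersected 6-periodics *)
Definition a2 (a b : R) : R := a * sqrt a * sqrt (a - 2 * b) / (a - b).
Definition b2 (a b : R) : R := b * sqrt b * sqrt (2 * a - b) / (a - b).

Definition periodic6 (a b : R) (P : nat -> pt) : Prop :=
  (forall i, (i < 6)%nat -> on_ellipse a b (P i)) /\
  (forall i, (i < 6)%nat -> vtx P i <> vtx P (i + 1)) /\
  (forall i, (i < 6)%nat -> reflects a b P i).

Definition typeI_6periodic (a b : R) (P : nat -> pt) : Prop :=
  periodic6 a b P /\
  (forall i, (i < 6)%nat ->
     tangent_to_hyperbola (a2 a b) (b2 a b) (vtx P i) (vtx P (i + 1))).

(* angle (in [0, pi/2]) between two lines with direction vectors u, v *)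
Definition line_angle (u v : pt) : R :=
  acos (Rabs (dot u v) / (vnorm u * vnorm v)).

(* theta_i' : angle at the outer-polygon vertex P_i' between the tangent lines
   to the ellipse at P_i and P_{i+1} *)
Definition outer_angle (a b : R) (P : nat -> pt) (i : nat) : R :=
  line_angle (ell_tangent a b (vtx P i)) (ell_tangent a b (vtx P (i + 1))).

Definition perimeter6 (P : nat -> pt) : R :=
  sum_f_R0 (fun i => vnorm (vsub (vtx P (i + 1)) (vtx P i))) 5.

Definition joachimsthal (a b : R) (P : nat -> pt) : R :=
  let v := vsub (vtx P 0) (vtx P 5) in
  / 2 * dot (grad_f a b (vtx P 0)) (fst v / vnorm v, snd v / vnorm v).

(* Main.v *)
Require Import Defs.
From Stdlib Require Import Reals Lra Psatz.
Open Scope R_scope.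

Lemma chord_ids (a b x y x' y' : R) :
  0 < b -> 2 * b < a ->
  x^2/a^2 + y^2/b^2 = 1 -> x'^2/a^2 + y'^2/b^2 = 1 ->
  x*x'/a^3 - y*y'/b^3 = 1/(a-b) ->
  let c := (a^2+b^2-(a^2-b^2)*(x*x'/a^2 - y*y'/b^2))/(2*(a-b)^2) in
  (y*y'/b^4 + x*x'/a^4)^2 = c * ((y^2/b^4 + x^2/a^4) * (y'^2/b^4 + x'^2/a^4)) /\
  (x'-x)^2 + (y'-y)^2 = (2*(a-b)*c)^2 /\
  1 - x*x'/a^2 - y*y'/b^2 = 2*c.
Proof.
  intros Hb Hab E1 E2 HB c.
  assert (Ha : 0 < a) by lra.
  assert (Hamb : a - b <> 0) by lra.
  assert (Hy : y^2 = b^2*(1 - x^2/a^2)) by (rewrite <- E1; field; lra).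
  assert (Hy' : y'^2 = b^2*(1 - x'^2/a^2)) by (rewrite <- E2; field; lra).
  assert (Hz : y*y' = b^3*(x*x'/a^3 - 1/(a-b))) by (rewrite <- HB; field; lra).
  assert (Hs : x^2 + x'^2 = a^2*(1 + (x*x'/a^2)^2 - (y*y'/b^2)^2)).
  { replace ((y*y'/b^2)^2) with (y^2*y'^2/b^4) by (field; lra).
    rewrite Hy, Hy'. field; lra. }
  rewrite Hz in Hs.
  unfold c; rewrite Hz.
  split; [|split].
  - assert (Hp : (y^2/b^4 + x^2/a^4) * (y'^2/b^4 + x'^2/a^4) =
       (1/b^2)^2 + (1/b^2)*(1/a^4 - 1/(a^2*b^2))*(x^2+x'^2) + (1/a^4 - 1/(a^2*b^2))^2*(x*x')^2).
    { rewrite Hy, Hy'. field. lra. }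
    rewrite Hp, Hs. field. lra.
  - assert (Hp : (x'-x)^2 + (y'-y)^2 = (x^2+x'^2)*(1 - b^2/a^2) + 2*b^2 - 2*(x*x') - 2*(y*y')).
    { replace ((x'-x)^2 + (y'-y)^2) with (x^2+x'^2 - 2*(x*x') + (y^2+y'^2) - 2*(y*y')) by ring.
      rewrite Hy, Hy'. field. lra. }
    rewrite Hp, Hs, Hz. field. lra.
  - field. lra.
Qed.

Definition Dq (a b x y : R) := x^2/a^4 + y^2/b^4.
Definition Fx (a b x y : R) := 2 * (1/(a-b)) * x / (a * Dq a b x y).

Lemma Dq_pos a b x y : 0 < b -> 0 < a -> x^2/a^2 + y^2/b^2 = 1 -> 0 < Dq a b x y.
Proof.
  intros Hb Ha E. unfold Dq.
  assert (0 <= x^2/a^4) by (apply Rmult_le_pos; [nra| left; apply Rinv_0_lt_compat; apply pow_lt; lra]).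
  assert (0 <= y^2/b^4) by (apply Rmult_le_pos; [nra| left; apply Rinv_0_lt_compat; apply pow_lt; lra]).
  destruct (Req_dec x 0) as [->|Hx].
  - assert (y^2 = b^2) by (rewrite <- (Rmult_1_r (b^2)), <- E; field; lra).
    assert (0 < y^2/b^4). { rewrite H1. apply Rdiv_lt_0_compat; apply pow_lt; lra. } lra.
  - assert (0 < x^2/a^4). { apply Rdiv_lt_0_compat; [|apply pow_lt; lra]. assert (0 < x^2) by (destruct (Rlt_or_le 0 x); [nra|destruct H1; [nra|congruence]]). exact H1. }
    lra.
Qed.

Lemma W_id (a b x y x' y' : R) :
  0 < b -> 2 * b < a ->
  x^2/a^2 + y^2/b^2 = 1 -> x'^2/a^2 + y'^2/b^2 = 1 ->
  x*x'/a^3 - y*y'/b^3 = 1/(a-b) ->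
  x * Fx a b x y + x' * Fx a b x' y' - x*x' = a^3*(a-2*b)/(a-b)^2.
Proof.
  intros Hb Hab E1 E2 HB.
  assert (Ha : 0 < a) by lra.
  assert (Hamb : a - b <> 0) by lra.
  pose proof (Dq_pos a b x y Hb Ha E1) as D1.
  pose proof (Dq_pos a b x' y' Hb Ha E2) as D2.
  assert (Hy : y^2 = b^2*(1 - x^2/a^2)) by (rewrite <- E1; field; lra).
  assert (Hy' : y'^2 = b^2*(1 - x'^2/a^2)) by (rewrite <- E2; field; lra).
  assert (Hz : y*y' = b^3*(x*x'/a^3 - 1/(a-b))) by (rewrite <- HB; field; lra).
  assert (Hs : x^2 + x'^2 = a^2*(1 + (x*x'/a^2)^2 - (y*y'/b^2)^2)).
  { replace ((y*y'/b^2)^2) with (y^2*y'^2/b^4) by (field; lra).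
    rewrite Hy, Hy'. field; lra. }
  rewrite Hz in Hs.
  set (d0 := 1/b^2). set (d1 := 1/a^4 - 1/(a^2*b^2)).
  assert (HD : Dq a b x y * Dq a b x' y' = d0^2 + d0*d1*(x^2+x'^2) + d1^2*(x*x')^2).
  { unfold Dq, d0, d1. rewrite Hy, Hy'. field. lra. }
  assert (HN : x * Fx a b x y + x' * Fx a b x' y' =
     2*(1/(a-b))/a * (d0*(x^2+x'^2) + 2*d1*(x*x')^2) / (Dq a b x y * Dq a b x' y')).
  { unfold Fx, d0, d1, Dq. rewrite Hy, Hy'.
    unfold Dq in D1, D2. rewrite Hy in D1. rewrite Hy' in D2.
    assert (K1 : (x*b)^2 + (a^2-x^2)*a^2 = a^4*b^2*(x ^ 2 / a ^ 4 + b ^ 2 * (1 - x ^ 2 / a ^ 2) / b ^ 4)) by (field; lra).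
    assert (K2 : (x'*b)^2 + (a^2-x'^2)*a^2 = a^4*b^2*(x' ^ 2 / a ^ 4 + b ^ 2 * (1 - x' ^ 2 / a ^ 2) / b ^ 4)) by (field; lra).
    assert (0 < a^4*b^2) by (apply Rmult_lt_0_compat; apply pow_lt; lra).
    field. repeat split; try lra; [rewrite K2|rewrite K1]; apply Rgt_not_eq; apply Rmult_lt_0_compat; lra. }
  assert (Hp : 0 < Dq a b x y * Dq a b x' y') by (apply Rmult_lt_0_compat; lra).
  rewrite HN, HD. rewrite HD in Hp. rewrite Hs in *. unfold d0, d1 in *. field. repeat split; try lra.
  match goal with |- ?E <> 0 => assert (Kd : E = a^8*b^4*(a-b)^2 * ((1 / b ^ 2) ^ 2 +
      1 / b ^ 2 * (1 / a ^ 4 - 1 / (a ^ 2 * b ^ 2)) *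
      (a ^ 2 *
       (1 + (x * x' / a ^ 2) ^ 2 -
        (b ^ 3 * (x * x' / a ^ 3 - 1 / (a - b)) / b ^ 2) ^ 2)) +
      (1 / a ^ 4 - 1 / (a ^ 2 * b ^ 2)) ^ 2 * (x * x') ^ 2)) by (field; lra) end.
  rewrite Kd. apply Rgt_not_eq. apply Rmult_lt_0_compat; [|lra].
  apply Rmult_lt_0_compat; [apply Rmult_lt_0_compat|]; apply pow_lt; lra.
Qed.

Lemma neq_pt (x y x' y' : R) : (x, y) <> (x', y') -> x - x' <> 0 \/ y - y' <> 0.
Proof.
  intros H. destruct (Req_dec x x'); destruct (Req_dec y y'); subst; try (left; lra); try (right; lra).
  exfalso; apply H; reflexivity.
Qed.

Lemma mid (a b n1 n2 x y x' y' : R) : 0 < a -> 0 < b ->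
  x^2/a^2 + y^2/b^2 = 1 -> x'^2/a^2 + y'^2/b^2 = 1 -> (x, y) <> (x', y') ->
  n1*x + n2*y = 1 -> n1*x' + n2*y' = 1 ->
  (x+x')*(a^2*n1^2+b^2*n2^2) = 2*a^2*n1 /\ (y+y')*(a^2*n1^2+b^2*n2^2) = 2*b^2*n2.
Proof.
  intros Ha Hb E1 E2 Hne L1 L2.
  pose proof (neq_pt _ _ _ _ Hne) as Hd.
  assert (K1 : (x-x')*n1 + (y-y')*n2 = 0) by lra.
  assert (K2 : (x-x')*((x+x')/a^2) + (y-y')*((y+y')/b^2) = 0).
  { replace ((x-x')*((x+x')/a^2) + (y-y')*((y+y')/b^2)) with ((x^2/a^2 + y^2/b^2) - (x'^2/a^2 + y'^2/b^2)) by (field; lra). rewrite E1, E2. ring. }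
  set (K := (x+x')/a^2 * n2 - (y+y')/b^2 * n1).
  assert (HK : K = 0).
  {
    assert (A1 : (x-x')*K = 0).
    { unfold K. assert ((x-x')*((x+x')/a^2) = - ((y-y')*((y+y')/b^2))) by lra.
      replace ((x-x')*((x+x')/a^2*n2 - (y+y')/b^2*n1)) with ((x-x')*((x+x')/a^2)*n2 - (y+y')/b^2 *((x-x')*n1)) by ring.
      rewrite H. replace ((x-x')*n1) with (-((y-y')*n2)) by lra. ring. }
    assert (A2 : (y-y')*K = 0).
    { unfold K. assert ((y-y')*((y+y')/b^2) = - ((x-x')*((x+x')/a^2))) by lra.
      replace ((y-y')*((x+x')/a^2*n2 - (y+y')/b^2*n1)) with ((x+x')/a^2*((y-y')*n2) - (y-y')*((y+y')/b^2)*n1) by ring.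
      rewrite H. replace ((y-y')*n2) with (-((x-x')*n1)) by lra. ring. }
    destruct Hd as [Hd|Hd].
    - apply Rmult_integral in A1; destruct A1; [lra|assumption].
    - apply Rmult_integral in A2; destruct A2; [lra|assumption]. }
  unfold K in HK; clear K.
  assert (HS : n1*(x+x') + n2*(y+y') = 2) by lra.
  split.
  - replace ((x+x')*(a^2*n1^2+b^2*n2^2)) with (a^2*n1*(n1*(x+x') + n2*(y+y')) + a^2*b^2*n2*((x+x')/a^2*n2 - (y+y')/b^2*n1)) by (field; lra).
    rewrite HS, HK. ring.
  - replace ((y+y')*(a^2*n1^2+b^2*n2^2)) with (b^2*n2*(n1*(x+x') + n2*(y+y')) - a^2*b^2*n1*((x+x')/a^2*n2 - (y+y')/b^2*n1)) by (field; lra).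
    rewrite HS, HK. ring.
Qed.

Lemma prods (a b n1 n2 x y x' y' : R) : 0 < a -> 0 < b ->
  x^2/a^2 + y^2/b^2 = 1 -> n1*x + n2*y = 1 ->
  (x+x')*(a^2*n1^2+b^2*n2^2) = 2*a^2*n1 -> (y+y')*(a^2*n1^2+b^2*n2^2) = 2*b^2*n2 ->
  x*x'*(a^2*n1^2+b^2*n2^2) = a^2*(1-b^2*n2^2) /\ y*y'*(a^2*n1^2+b^2*n2^2) = b^2*(1-a^2*n1^2).
Proof.
  intros Ha Hb E L M1 M2.
  assert (Q1 : (a^2*n1^2+b^2*n2^2)*x^2 - 2*a^2*n1*x + a^2*(1-b^2*n2^2) = a^2*b^2*n2^2*(x^2/a^2+y^2/b^2-1) - a^2*(n1*x+n2*y-1)*(n2*y+1-n1*x)) by (field; lra).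
  assert (Q2 : (a^2*n1^2+b^2*n2^2)*y^2 - 2*b^2*n2*y + b^2*(1-a^2*n1^2) = a^2*b^2*n1^2*(x^2/a^2+y^2/b^2-1) - b^2*(n1*x+n2*y-1)*(n1*x+1-n2*y)) by (field; lra).
  rewrite E, L in Q1, Q2.
  split.
  - replace (x*x'*(a^2*n1^2+b^2*n2^2)) with (x*((x+x')*(a^2*n1^2+b^2*n2^2)) - (a^2*n1^2+b^2*n2^2)*x^2) by ring.
    rewrite M1. lra.
  - replace (y*y'*(a^2*n1^2+b^2*n2^2)) with (y*((y+y')*(a^2*n1^2+b^2*n2^2)) - (a^2*n1^2+b^2*n2^2)*y^2) by ring.
    rewrite M2. lra.
Qed.

Lemma a2_sq a b : 0 < b -> 2*b < a -> (a2 a b)^2 = a^3*(a-2*b)/(a-b)^2.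
Proof.
  intros Hb Hab. unfold a2.
  assert (sqrt a * sqrt a = a) by (apply sqrt_sqrt; lra).
  assert (sqrt (a-2*b) * sqrt (a-2*b) = a-2*b) by (apply sqrt_sqrt; lra).
  replace ((a * sqrt a * sqrt (a - 2 * b) / (a - b)) ^ 2) with (a^2*(sqrt a * sqrt a)*(sqrt (a-2*b) * sqrt (a-2*b))/(a-b)^2) by (field; lra).
  rewrite H, H0. field. lra.
Qed.

Lemma b2_sq a b : 0 < b -> 2*b < a -> (b2 a b)^2 = b^3*(2*a-b)/(a-b)^2.
Proof.
  intros Hb Hab. unfold b2.
  assert (sqrt b * sqrt b = b) by (apply sqrt_sqrt; lra).
  assert (sqrt (2*a-b) * sqrt (2*a-b) = 2*a-b) by (apply sqrt_sqrt; lra).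
  replace ((b * sqrt b * sqrt (2*a-b) / (a - b)) ^ 2) with (b^2*(sqrt b * sqrt b)*(sqrt (2*a-b) * sqrt (2*a-b))/(a-b)^2) by (field; lra).
  rewrite H, H0. field. lra.
Qed.

Lemma sq_pos (x : R) : x <> 0 -> 0 < x^2.
Proof. intros H. destruct (Rlt_or_le 0 x) as [H1|H1]; [nra|]. destruct H1; [nra|congruence]. Qed.

Lemma tan_bil (a b x y x' y' : R) : 0 < b -> 2*b < a ->
  x^2/a^2 + y^2/b^2 = 1 -> x'^2/a^2 + y'^2/b^2 = 1 -> (x, y) <> (x', y') ->
  tangent_to_hyperbola (a2 a b) (b2 a b) (x, y) (x', y') ->
  x*x'/a^3 - y*y'/b^3 = 1/(a-b).
Proof.
  intros Hb Hab E1 E2 Hne [[X1 X2] [Hh [Hc Hd]]].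
  unfold cross, dot, vsub in Hc, Hd; cbn [fst snd] in Hh, Hc, Hd.
  assert (Ha : 0 < a) by lra.
  pose proof (a2_sq a b Hb Hab) as HA. pose proof (b2_sq a b Hb Hab) as HB.
  set (A2 := a2 a b ^ 2) in *. set (B2 := b2 a b ^ 2) in *.
  assert (A2p : 0 < A2) by (rewrite HA; apply Rdiv_lt_0_compat; [apply Rmult_lt_0_compat; [apply pow_lt|]|apply pow_lt]; lra).
  assert (B2p : 0 < B2) by (rewrite HB; apply Rdiv_lt_0_compat; [apply Rmult_lt_0_compat; [apply pow_lt|]|apply pow_lt]; lra).
  clearbody A2 B2.
  remember (X1/A2) as n1 eqn:En1. remember (- X2/B2) as n2 eqn:En2.
  assert (Hdual : A2*n1^2 - B2*n2^2 = 1) by (rewrite <- Hh; rewrite En1, En2; field; lra).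
  assert (HnX : n1*X1 + n2*X2 = 1) by (rewrite <- Hh; rewrite En1, En2; field; lra).
  assert (Hdn : (x'-x)*n1 + (y'-y)*n2 = 0) by exact Hd.
  assert (Hw : (X1-x)*n1 + (X2-y)*n2 = 0).
  { set (w := (X1-x)*n1 + (X2-y)*n2).
    assert (A1 : (x'-x)*w = 0).
    { unfold w. replace ((x'-x)*((X1-x)*n1 + (X2-y)*n2)) with ((X1-x)*((x'-x)*n1 + (y'-y)*n2) + n2*((x'-x)*(X2-y) - (y'-y)*(X1-x))) by ring.
      rewrite Hdn, Hc. ring. }
    assert (A2' : (y'-y)*w = 0).
    { unfold w. replace ((y'-y)*((X1-x)*n1 + (X2-y)*n2)) with ((X2-y)*((x'-x)*n1 + (y'-y)*n2) - n1*((x'-x)*(X2-y) - (y'-y)*(X1-x))) by ring.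
      rewrite Hdn, Hc. ring. }
    destruct (neq_pt _ _ _ _ Hne) as [H|H].
    - apply Rmult_integral in A1; destruct A1; [lra|assumption].
    - apply Rmult_integral in A2'; destruct A2'; [lra|assumption]. }
  assert (L1 : n1*x + n2*y = 1) by lra.
  assert (L2 : n1*x' + n2*y' = 1) by lra.
  destruct (mid a b n1 n2 x y x' y' Ha Hb E1 E2 Hne L1 L2) as [M1 M2].
  destruct (prods a b n1 n2 x y x' y' Ha Hb E1 L1 M1 M2) as [P1 P2].
  assert (Dp : 0 < a^2*n1^2+b^2*n2^2).
  { assert (0 < a^2) by (apply pow_lt; lra). assert (0 < b^2) by (apply pow_lt; lra).
    destruct (Req_dec n1 0) as [Z|Z].
    - assert (n2 <> 0) by (intro Z2; rewrite Z, Z2 in L1; lra).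
      pose proof (sq_pos n2 H1). assert (0 <= n1^2) by nra. nra.
    - pose proof (sq_pos n1 Z). assert (0 <= n2^2) by nra. nra. }
  assert (Key : (1 - b^2*n2^2)/a - (1 - a^2*n1^2)/b = 1/(a-b) * (a^2*n1^2+b^2*n2^2)).
  { assert (K : (1 - b^2*n2^2)/a - (1 - a^2*n1^2)/b - 1/(a-b) * (a^2*n1^2+b^2*n2^2) =
       (a-b)/(a*b) * ((A2*n1^2 - B2*n2^2) - 1)) by (rewrite HA, HB; field; lra).
    rewrite Hdual in K. lra. }
  assert (xx : x*x' = a^2*(1-b^2*n2^2)/(a^2*n1^2+b^2*n2^2)) by (rewrite <- P1; field; lra).
  assert (yy : y*y' = b^2*(1-a^2*n1^2)/(a^2*n1^2+b^2*n2^2)) by (rewrite <- P2; field; lra).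
  replace (x*x'/a^3 - y*y'/b^3) with ((x*x')/a^3 - (y*y')/b^3) by reflexivity.
  rewrite xx, yy.
  replace (a ^ 2 * (1 - b ^ 2 * n2 ^ 2) / (a ^ 2 * n1 ^ 2 + b ^ 2 * n2 ^ 2) / a ^ 3 -
    b ^ 2 * (1 - a ^ 2 * n1 ^ 2) / (a ^ 2 * n1 ^ 2 + b ^ 2 * n2 ^ 2) / b ^ 3)
   with (((1 - b^2*n2^2)/a - (1 - a^2*n1^2)/b) / (a ^ 2 * n1 ^ 2 + b ^ 2 * n2 ^ 2)) by (field; lra).
  rewrite Key. field. lra.
Qed.

Lemma inv_lt (u v : R) : 0 < v -> v < u -> 1/u < 1/v.
Proof. intros. unfold Rdiv. rewrite !Rmult_1_l. apply Rinv_lt_contravar; nra. Qed.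

Lemma hfact (a b t : R) : 0 < b -> 2*b < a ->
  let D := t/a^2 + (1-t)/b^2 in let D3 := t/a^4 + (1-t)/b^4 in
  let B0 := t/a - (1-t)/b in let B1 := t/a^3 - (1-t)/b^3 in
  2*D*B1 + (1/(a-b) - B0)*D3 =
  (1/a^2-1/b^2)*(1/a+1/b)*(1/a-1/b)^2 * (t - a^3*(a-2*b)/((a-b)^2*(a^2-b^2))) * (t - a^2/(a^2-b^2)).
Proof.
  intros Hb Hab D D3 B0 B1. unfold D, D3, B0, B1.
  assert (a^2 - b^2 <> 0) by nra.
  field. repeat split; lra.
Qed.

Lemma degen (a b x y x' y' : R) : 0 < b -> 2*b < a ->
  x^2/a^2 + y^2/b^2 = 1 -> x'^2/a^2 + y'^2/b^2 = 1 -> (x, y) <> (x', y') ->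
  (x'-x)*(y/b^2) - (y'-y)*(x/a^2) = 0 ->
  x*x'/a^3 - y*y'/b^3 = 1/(a-b) ->
  (x' + x') * (x^2/a^4 + y^2/b^4) = 2 * (1/(a-b)) * x / a.
Proof.
  intros Hb Hab E1 E2 Hne Hc HB.
  assert (Ha : 0 < a) by lra.
  assert (Dp : 0 < x^2/a^4 + y^2/b^4).
  { assert (0 < a^4) by (apply pow_lt; lra). assert (0 < b^4) by (apply pow_lt; lra).
    destruct (Req_dec x 0) as [Z|Z].
    - assert (y <> 0) by (intro Z2; rewrite Z, Z2 in E1; field_simplify in E1; lra).
      pose proof (sq_pos y H1). assert (0 <= x^2) by nra.
      assert (0 < y^2/b^4) by (apply Rdiv_lt_0_compat; lra).
      assert (0 <= x^2/a^4) by (apply Rmult_le_pos; [lra| left; apply Rinv_0_lt_compat; lra]). lra.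
    - pose proof (sq_pos x Z). assert (0 <= y^2) by nra.
      assert (0 < x^2/a^4) by (apply Rdiv_lt_0_compat; lra).
      assert (0 <= y^2/b^4) by (apply Rmult_le_pos; [lra| left; apply Rinv_0_lt_compat; lra]). lra. }
  remember (x^2/a^4 + y^2/b^4) as D eqn:ED.
  remember (((x'-x)*(x/a^2) + (y'-y)*(y/b^2))/D) as s eqn:Es.
  assert (Hx' : x' = x*(1 + s/a^2)).
  { assert (K : (x'-x)*D - ((x'-x)*(x/a^2) + (y'-y)*(y/b^2))*(x/a^2) = (y/b^2)*((x'-x)*(y/b^2) - (y'-y)*(x/a^2))) by (rewrite ED; field; lra).
    rewrite Hc in K.
    assert (K2 : (x'-x)*D = ((x'-x)*(x/a^2) + (y'-y)*(y/b^2))*(x/a^2)) by lra.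
    rewrite Es. replace (x*(1 + ((x'-x)*(x/a^2) + (y'-y)*(y/b^2))/D/a^2)) with (x + ((x'-x)*(x/a^2) + (y'-y)*(y/b^2))*(x/a^2)/D) by (field; lra).
    rewrite <- K2. field. lra. }
  assert (Hy' : y' = y*(1 + s/b^2)).
  { assert (K : (y'-y)*D - ((x'-x)*(x/a^2) + (y'-y)*(y/b^2))*(y/b^2) = - (x/a^2)*((x'-x)*(y/b^2) - (y'-y)*(x/a^2))) by (rewrite ED; field; lra).
    rewrite Hc in K.
    assert (K2 : (y'-y)*D = ((x'-x)*(x/a^2) + (y'-y)*(y/b^2))*(y/b^2)) by lra.
    rewrite Es. replace (y*(1 + ((x'-x)*(x/a^2) + (y'-y)*(y/b^2))/D/b^2)) with (y + ((x'-x)*(x/a^2) + (y'-y)*(y/b^2))*(y/b^2)/D) by (field; lra).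
    rewrite <- K2. field. lra. }
  clear Es.
  assert (Hs0 : s <> 0).
  { intro Z. apply Hne. rewrite Hx', Hy', Z. f_equal; field; lra. }
  remember (x^2/a^6 + y^2/b^6) as D3 eqn:ED3.
  assert (HE : s*(2*D + s*D3) = 0).
  { rewrite Hx', Hy' in E2.
    assert (K : (x*(1+s/a^2))^2/a^2 + (y*(1+s/b^2))^2/b^2 - (x^2/a^2+y^2/b^2) = s*(2*D + s*D3)) by (rewrite ED, ED3; field; lra).
    rewrite E1, E2 in K. lra. }
  apply Rmult_integral in HE. destruct HE as [HE|HE]; [contradiction|].
  rewrite Hx', Hy' in HB.
  remember (x^2/a^2) as t eqn:Et.
  assert (Hx2 : x^2 = a^2*t) by (rewrite Et; field; lra).
  assert (Hy2 : y^2 = b^2*(1-t)) by (rewrite <- E1, Et; field; lra).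
  assert (t <= 1) by (assert (0 <= y^2) by nra; assert (0 < b^2) by nra; nra).
  assert (ED' : D = t/a^2 + (1-t)/b^2) by (rewrite ED, Hx2, Hy2; field; lra).
  assert (ED3' : D3 = t/a^4 + (1-t)/b^4) by (rewrite ED3, Hx2, Hy2; field; lra).
  assert (HB' : (t/a - (1-t)/b) + s*(t/a^3 - (1-t)/b^3) = 1/(a-b)).
  { rewrite <- HB. replace (x * (x * (1 + s / a ^ 2)) / a ^ 3 - y * (y * (1 + s / b ^ 2)) / b ^ 3) with (x^2 * (1 + s / a ^ 2) / a ^ 3 - y^2 * (1 + s / b ^ 2) / b ^ 3) by (unfold Rdiv; ring).
    rewrite Hx2, Hy2. field. lra. }
  assert (Hh : 2*D*(t/a^3 - (1-t)/b^3) + (1/(a-b) - (t/a - (1-t)/b))*D3 = 0).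
  { assert (HD3 : -(2*D)/s = D3) by (replace (-(2*D)) with (s*D3) by lra; field; assumption).
    rewrite <- HB', <- HD3. field. repeat split; lra. }
  rewrite ED', ED3' in Hh. rewrite (hfact a b t Hb Hab) in Hh.
  assert (a^2 - b^2 > 0) by nra.
  assert (t1 : t - a^2/(a^2-b^2) <> 0).
  { assert (1 < a^2/(a^2-b^2)). { apply (Rmult_lt_reg_r (a^2-b^2)); [lra|]. field_simplify; nra. } lra. }
  assert (cnz : (1/a^2-1/b^2)*(1/a+1/b)*(1/a-1/b)^2 <> 0).
  { assert (1/a < 1/b) by (apply inv_lt; lra).
    assert (0 < 1/a) by (apply Rdiv_lt_0_compat; lra).
    assert (1/a^2 < 1/b^2) by (apply inv_lt; nra).
    assert (0 < (1/a-1/b)^2) by (apply sq_pos; lra).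
    apply Rmult_integral_contrapositive; split; [|lra]. apply Rmult_integral_contrapositive; split; lra. }
  assert (Ht0 : t = a^3*(a-2*b)/((a-b)^2*(a^2-b^2))).
  { apply Rmult_integral in Hh. destruct Hh as [Hh|Hh]; [|contradiction].
    apply Rmult_integral in Hh. destruct Hh as [Hh|Hh]; [contradiction|lra]. }
  assert (D3nz : D3 <> 0) by (intro Z; rewrite Z in HE; lra).
  assert (Hs : s = -(2*D)/D3) by (replace (-(2*D)) with (s*D3) by lra; field; assumption).
  rewrite Hx'. rewrite Hs. rewrite ED', ED3'. rewrite Ht0. rewrite ED3', Ht0 in D3nz.
  field. repeat split; try lra.
  match goal with |- ?E <> 0 => assert (KE : E = (a-b)^2*(a^2-b^2)*a*b^4 * (a ^ 3 * (a - 2 * b) / ((a - b) ^ 2 * (a ^ 2 - b ^ 2)) / a ^ 4 +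
       (1 - a ^ 3 * (a - 2 * b) / ((a - b) ^ 2 * (a ^ 2 - b ^ 2))) / b ^ 4)) by (field; repeat split; lra) end.
  rewrite KE. apply Rmult_integral_contrapositive; split; [|exact D3nz].
  assert (0 < (a-b)^2) by (apply pow_lt; lra). assert (0 < b^4) by (apply pow_lt; lra).
  apply Rgt_not_eq. apply Rmult_lt_0_compat; [|lra]. apply Rmult_lt_0_compat; [|lra]. apply Rmult_lt_0_compat; lra.
Qed.

Lemma cos2_angle (u v : pt) : 0 < dot u u -> 0 < dot v v ->
  cos (2 * line_angle u v) = 2 * ((dot u v)^2/(dot u u * dot v v)) - 1.
Proof.
  intros Hu Hv. unfold line_angle, vnorm.
  rewrite cos_2a_cos.
  assert (su : sqrt (dot u u) * sqrt (dot u u) = dot u u) by (apply sqrt_sqrt; lra).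
  assert (sv : sqrt (dot v v) * sqrt (dot v v) = dot v v) by (apply sqrt_sqrt; lra).
  assert (pu : 0 < sqrt (dot u u)) by (apply sqrt_lt_R0; lra).
  assert (pv : 0 < sqrt (dot v v)) by (apply sqrt_lt_R0; lra).
  assert (CS : (dot u v)^2 <= dot u u * dot v v).
  { destruct u as [u1 u2], v as [v1 v2]. unfold dot; simpl.
    assert (0 <= (u1*v2 - u2*v1)^2) by (apply pow2_ge_0).
    assert ((u1*v1+u2*v2)^2 + (u1*v2 - u2*v1)^2 = (u1*u1+u2*u2)*(v1*v1+v2*v2)) by ring. lra. }
  assert (Hr : 0 <= Rabs (dot u v) / (sqrt (dot u u) * sqrt (dot v v)) <= 1).
  { split. apply Rmult_le_pos; [apply Rabs_pos| left; apply Rinv_0_lt_compat; nra].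
    apply Rmult_le_reg_r with (sqrt (dot u u) * sqrt (dot v v)); [nra|].
    unfold Rdiv. rewrite Rmult_assoc, Rinv_l, Rmult_1_r, Rmult_1_l by nra.
    apply Rsqr_incr_0_var; [|nra]. unfold Rsqr. rewrite <- Rabs_mult, Rabs_right by nra.
    replace (sqrt (dot u u) * sqrt (dot v v) * (sqrt (dot u u) * sqrt (dot v v))) with ((sqrt (dot u u) * sqrt (dot u u)) * (sqrt (dot v v) * sqrt (dot v v))) by ring.
    rewrite su, sv.
    nra. }
  rewrite cos_acos by lra.
  replace (2 * (Rabs (dot u v) / (sqrt (dot u u) * sqrt (dot v v))) *
    (Rabs (dot u v) / (sqrt (dot u u) * sqrt (dot v v)))) with (2 * ((Rabs (dot u v) * Rabs (dot u v)) / ((sqrt (dot u u) * sqrt (dot u u)) * (sqrt (dot v v) * sqrt (dot v v))))) by (field; lra).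
  rewrite <- Rabs_mult, Rabs_right by nra. rewrite su, sv. f_equal. f_equal. f_equal. ring.
Qed.

Lemma chord_all (a b x y x' y' : R) : 0 < b -> 2*b < a ->
  on_ellipse a b (x, y) -> on_ellipse a b (x', y') -> (x, y) <> (x', y') ->
  tangent_to_hyperbola (a2 a b) (b2 a b) (x, y) (x', y') ->
  let c := (a^2+b^2-(a^2-b^2)*(x*x'/a^2 - y*y'/b^2))/(2*(a-b)^2) in
  x*x'/a^3 - y*y'/b^3 = 1/(a-b) /\
  cos (2 * line_angle (ell_tangent a b (x, y)) (ell_tangent a b (x', y'))) = 2*c - 1 /\
  vnorm (vsub (x', y') (x, y)) = 2*(a-b)*c /\
  0 < c /\ 1 - x*x'/a^2 - y*y'/b^2 = 2*c.
Proof.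
  intros Hb Hab E1 E2 Hne Ht c.
  unfold on_ellipse in E1, E2; simpl in E1, E2.
  assert (HB := tan_bil a b x y x' y' Hb Hab E1 E2 Hne Ht).
  destruct (chord_ids a b x y x' y' Hb Hab E1 E2 HB) as [I1 [I2 I3]].
  fold c in I1, I2, I3.
  assert (Ec : c = (a^2+b^2-(a^2-b^2)*(x*x'/a^2 - y*y'/b^2))/(2*(a-b)^2)) by reflexivity. clearbody c.
  assert (Ha : 0 < a) by lra.
  pose proof (Dq_pos a b x y Hb Ha E1) as D1. pose proof (Dq_pos a b x' y' Hb Ha E2) as D2.
  unfold Dq in D1, D2.
  assert (Huu : dot (ell_tangent a b (x, y)) (ell_tangent a b (x, y)) = y^2/b^4 + x^2/a^4) by (unfold dot, ell_tangent; simpl; field; lra).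
  assert (Hvv : dot (ell_tangent a b (x', y')) (ell_tangent a b (x', y')) = y'^2/b^4 + x'^2/a^4) by (unfold dot, ell_tangent; simpl; field; lra).
  assert (Huv : dot (ell_tangent a b (x, y)) (ell_tangent a b (x', y')) = y*y'/b^4 + x*x'/a^4) by (unfold dot, ell_tangent; simpl; field; lra).
  assert (Hab4 : 0 < a^4*b^4) by (apply Rmult_lt_0_compat; apply pow_lt; lra).
  assert (K1 : y^2*a^4 + x^2*b^4 = a^4*b^4*(x^2/a^4+y^2/b^4)) by (field; lra).
  assert (K2 : y'^2*a^4 + x'^2*b^4 = a^4*b^4*(x'^2/a^4+y'^2/b^4)) by (field; lra).
  assert (c0 : 0 <= c).
  { assert (c = (y*y'/b^4 + x*x'/a^4)^2 / ((y^2/b^4 + x^2/a^4) * (y'^2/b^4 + x'^2/a^4))) .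
    { rewrite I1. field. rewrite K1, K2. repeat split; try lra; apply Rgt_not_eq; apply Rmult_lt_0_compat; lra. }
    rewrite H. apply Rmult_le_pos; [apply pow2_ge_0| left; apply Rinv_0_lt_compat; nra]. }
  assert (Hn : vnorm (vsub (x', y') (x, y)) = 2*(a-b)*c).
  { unfold vnorm, vsub, dot; simpl. replace ((x'-x)*(x'-x) + (y'-y)*(y'-y)) with ((x'-x)^2+(y'-y)^2) by ring.
    rewrite I2. apply sqrt_pow2. nra. }
  assert (cp : 0 < c).
  { destruct c0 as [|c0]; [assumption|]. exfalso. apply Hne.
    rewrite <- c0 in I2. replace ((2*(a-b)*0)^2) with 0 in I2 by ring.
    assert ((x'-x)^2 = 0) by (pose proof (pow2_ge_0 (x'-x)); pose proof (pow2_ge_0 (y'-y)); lra).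
    assert ((y'-y)^2 = 0) by (pose proof (pow2_ge_0 (x'-x)); pose proof (pow2_ge_0 (y'-y)); lra).
    assert (x' - x = 0) by nra. assert (y' - y = 0) by nra. f_equal; lra. }
  repeat split; try assumption.
  rewrite cos2_angle by (rewrite ?Huu, ?Hvv; lra).
  rewrite Huu, Hvv, Huv, I1. field. rewrite K1, K2. repeat split; try lra; apply Rgt_not_eq; apply Rmult_lt_0_compat; lra.
Qed.

Lemma vertex (a b x y zx zy wx wy : R) : 0 < b -> 2*b < a ->
  x^2/a^2 + y^2/b^2 = 1 -> zx^2/a^2 + zy^2/b^2 = 1 -> wx^2/a^2 + wy^2/b^2 = 1 ->
  (zx, zy) <> (x, y) -> (x, y) <> (wx, wy) ->
  zx*x/a^3 - zy*y/b^3 = 1/(a-b) -> x*wx/a^3 - y*wy/b^3 = 1/(a-b) ->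
  (let p := (x, y) in
   let u := vsub (zx, zy) p in
   let w := vsub (wx, wy) p in
   cross (fst u / vnorm u + fst w / vnorm w, snd u / vnorm u + snd w / vnorm w)
        (grad_f a b p) = 0) ->
  zx + wx = Fx a b x y.
Proof.
  intros Hb Hab E Ez Ew Hz Hw Bz Bw Hr.
  assert (Ha : 0 < a) by lra.
  pose proof (Dq_pos a b x y Hb Ha E) as DP. unfold Fx.
  destruct (Req_dec zx wx) as [X|X]; [destruct (Req_dec zy wy) as [Y|Y]|].
  - subst zx zy.
    cbv zeta in Hr. unfold cross, vsub, grad_f in Hr. cbn [fst snd] in Hr.
    set (n := vnorm (wx - x, wy - y)) in Hr.
    assert (np : 0 < n).
    { unfold n, vnorm, dot. cbn [fst snd]. apply sqrt_lt_R0.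
      replace ((wx-x)*(wx-x)+(wy-y)*(wy-y)) with ((wx-x)^2+(wy-y)^2) by ring.
      pose proof (pow2_ge_0 (wx-x)). pose proof (pow2_ge_0 (wy-y)).
      destruct (neq_pt _ _ _ _ Hw) as [Hq|Hq].
      - assert (0 < (x-wx)^2) by (apply sq_pos; lra). replace ((wx-x)^2) with ((x-wx)^2) by ring. lra.
      - assert (0 < (y-wy)^2) by (apply sq_pos; lra). replace ((wy-y)^2) with ((y-wy)^2) by ring. lra. }
    clearbody n.
    assert (Hc : (wx-x)*(y/b^2) - (wy-y)*(x/a^2) = 0).
    { assert (K : ((wx - x) / n + (wx - x) / n) * (2 * y / b ^ 2) - ((wy - y) / n + (wy - y) / n) * (2 * x / a ^ 2) = 4/n * ((wx-x)*(y/b^2) - (wy-y)*(x/a^2))) by (field; repeat split; lra).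
      rewrite Hr in K. assert (0 < 4/n) by (apply Rdiv_lt_0_compat; lra).
      symmetry in K. apply Rmult_integral in K. destruct K; [lra|assumption]. }
    pose proof (degen a b x y wx wy Hb Hab E Ew Hw Hc Bw) as Dg.
    unfold Dq. apply (Rmult_eq_reg_r (x ^ 2 / a ^ 4 + y ^ 2 / b ^ 4)); [|unfold Dq in DP; lra].
    rewrite Dg. unfold Dq in DP.
    assert (K1 : x^2*b^4 + y^2*a^4 = a^4*b^4*(x^2/a^4+y^2/b^4)) by (field; lra).
    assert (Hab4 : 0 < a^4*b^4) by (apply Rmult_lt_0_compat; apply pow_lt; lra).
    field. rewrite K1. repeat split; try lra. apply Rgt_not_eq; apply Rmult_lt_0_compat; lra.
  - assert (Hzw : (zx, zy) <> (wx, wy)) by (intro K; inversion K; contradiction).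
    pose (n1 := (a-b)*x/a^3). pose (n2 := -(a-b)*y/b^3).
    assert (L1 : n1*zx + n2*zy = 1).
    { replace (n1*zx + n2*zy) with ((a-b)*(zx*x/a^3 - zy*y/b^3)) by (unfold n1, n2; field; lra).
      rewrite Bz. field. lra. }
    assert (L2 : n1*wx + n2*wy = 1).
    { replace (n1*wx + n2*wy) with ((a-b)*(x*wx/a^3 - y*wy/b^3)) by (unfold n1, n2; field; lra).
      rewrite Bw. field. lra. }
    destruct (mid a b n1 n2 zx zy wx wy Ha Hb Ez Ew Hzw L1 L2) as [M1 _].
    assert (HD : a^2*n1^2 + b^2*n2^2 = (a-b)^2 * Dq a b x y) by (unfold n1, n2, Dq; field; lra).
    rewrite HD in M1. unfold n1 in M1.
    assert (0 < (a-b)^2) by (apply pow_lt; lra).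
    apply (Rmult_eq_reg_r ((a-b)^2 * Dq a b x y)); [|apply Rgt_not_eq; apply Rmult_lt_0_compat; lra].
    rewrite M1. field. repeat split; lra.
  - assert (Hzw : (zx, zy) <> (wx, wy)) by (intro K; inversion K; contradiction).
    pose (n1 := (a-b)*x/a^3). pose (n2 := -(a-b)*y/b^3).
    assert (L1 : n1*zx + n2*zy = 1).
    { replace (n1*zx + n2*zy) with ((a-b)*(zx*x/a^3 - zy*y/b^3)) by (unfold n1, n2; field; lra).
      rewrite Bz. field. lra. }
    assert (L2 : n1*wx + n2*wy = 1).
    { replace (n1*wx + n2*wy) with ((a-b)*(x*wx/a^3 - y*wy/b^3)) by (unfold n1, n2; field; lra).
      rewrite Bw. field. lra. }
    destruct (mid a b n1 n2 zx zy wx wy Ha Hb Ez Ew Hzw L1 L2) as [M1 _].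
    assert (HD : a^2*n1^2 + b^2*n2^2 = (a-b)^2 * Dq a b x y) by (unfold n1, n2, Dq; field; lra).
    rewrite HD in M1. unfold n1 in M1.
    assert (0 < (a-b)^2) by (apply pow_lt; lra).
    apply (Rmult_eq_reg_r ((a-b)^2 * Dq a b x y)); [|apply Rgt_not_eq; apply Rmult_lt_0_compat; lra].
    rewrite M1. field. repeat split; lra.
Qed.

Theorem mainTheorem15 (a b : R) (P : nat -> pt) :
  0 < b -> 2 * b < a ->
  typeI_6periodic a b P ->
  sum_f_R0 (fun i => cos (2 * outer_angle a b P i)) 5
    = - (2 * (a^2 - 4 * a * b + b^2)) / (a - b)^2 /\
  sum_f_R0 (fun i => cos (2 * outer_angle a b P i)) 5
    = joachimsthal a b P * perimeter6 P - 6.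
Proof.
  intros Hb Hab [[Hell [Hdist Hrefl]] Htan].
  assert (E0 := Hell 0%nat ltac:(lia)). assert (E1 := Hell 1%nat ltac:(lia)).
  assert (E2 := Hell 2%nat ltac:(lia)). assert (E3 := Hell 3%nat ltac:(lia)).
  assert (E4 := Hell 4%nat ltac:(lia)). assert (E5 := Hell 5%nat ltac:(lia)).
  assert (N0 := Hdist 0%nat ltac:(lia)). assert (N1 := Hdist 1%nat ltac:(lia)).
  assert (N2 := Hdist 2%nat ltac:(lia)). assert (N3 := Hdist 3%nat ltac:(lia)).
  assert (N4 := Hdist 4%nat ltac:(lia)). assert (N5 := Hdist 5%nat ltac:(lia)).
  assert (R0 := Hrefl 0%nat ltac:(lia)). assert (R1 := Hrefl 1%nat ltac:(lia)).
  assert (R2 := Hrefl 2%nat ltac:(lia)). assert (R3 := Hrefl 3%nat ltac:(lia)).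
  assert (R4 := Hrefl 4%nat ltac:(lia)). assert (R5 := Hrefl 5%nat ltac:(lia)).
  assert (T0 := Htan 0%nat ltac:(lia)). assert (T1 := Htan 1%nat ltac:(lia)).
  assert (T2 := Htan 2%nat ltac:(lia)). assert (T3 := Htan 3%nat ltac:(lia)).
  assert (T4 := Htan 4%nat ltac:(lia)). assert (T5 := Htan 5%nat ltac:(lia)).
  clear Hell Hdist Hrefl Htan.
  unfold reflects, joachimsthal, perimeter6, outer_angle, vtx in *. simpl in *.
  set (p0 := P 0%nat) in *. set (p1 := P 1%nat) in *. set (p2 := P 2%nat) in *.
  set (p3 := P 3%nat) in *. set (p4 := P 4%nat) in *. set (p5 := P 5%nat) in *.
  clearbody p0 p1 p2 p3 p4 p5. clear P.
  destruct p0 as [x0 y0]. destruct p1 as [x1 y1]. destruct p2 as [x2 y2].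
  destruct p3 as [x3 y3]. destruct p4 as [x4 y4]. destruct p5 as [x5 y5].
  pose proof (chord_all a b x0 y0 x1 y1 Hb Hab E0 E1 N0 T0) as K0.
  pose proof (chord_all a b x1 y1 x2 y2 Hb Hab E1 E2 N1 T1) as K1.
  pose proof (chord_all a b x2 y2 x3 y3 Hb Hab E2 E3 N2 T2) as K2.
  pose proof (chord_all a b x3 y3 x4 y4 Hb Hab E3 E4 N3 T3) as K3.
  pose proof (chord_all a b x4 y4 x5 y5 Hb Hab E4 E5 N4 T4) as K4.
  pose proof (chord_all a b x5 y5 x0 y0 Hb Hab E5 E0 N5 T5) as K5.
  cbv zeta in K0, K1, K2, K3, K4, K5.
  destruct K0 as [B0 [C0 [L0 [P0 J0]]]]. destruct K1 as [B1 [C1 [L1 [P1 J1]]]].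
  destruct K2 as [B2 [C2 [L2 [P2 J2]]]]. destruct K3 as [B3 [C3 [L3 [P3 J3]]]].
  destruct K4 as [B4 [C4 [L4 [P4 J4]]]]. destruct K5 as [B5 [C5 [L5 [P5 J5]]]].
  unfold on_ellipse in E0, E1, E2, E3, E4, E5. simpl in E0, E1, E2, E3, E4, E5.
  assert (V0 := vertex a b x0 y0 x5 y5 x1 y1 Hb Hab E0 E5 E1 N5 N0 B5 B0 R0).
  assert (V1 := vertex a b x1 y1 x0 y0 x2 y2 Hb Hab E1 E0 E2 N0 N1 B0 B1 R1).
  assert (V2 := vertex a b x2 y2 x1 y1 x3 y3 Hb Hab E2 E1 E3 N1 N2 B1 B2 R2).
  assert (V3 := vertex a b x3 y3 x2 y2 x4 y4 Hb Hab E3 E2 E4 N2 N3 B2 B3 R3).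
  assert (V4 := vertex a b x4 y4 x3 y3 x5 y5 Hb Hab E4 E3 E5 N3 N4 B3 B4 R4).
  assert (V5 := vertex a b x5 y5 x4 y4 x0 y0 Hb Hab E5 E4 E0 N4 N5 B4 B5 R5).
  assert (W0 := W_id a b x0 y0 x1 y1 Hb Hab E0 E1 B0).
  assert (W1 := W_id a b x1 y1 x2 y2 Hb Hab E1 E2 B1).
  assert (W2 := W_id a b x2 y2 x3 y3 Hb Hab E2 E3 B2).
  assert (W3 := W_id a b x3 y3 x4 y4 Hb Hab E3 E4 B3).
  assert (W4 := W_id a b x4 y4 x5 y5 Hb Hab E4 E5 B4).
  assert (W5 := W_id a b x5 y5 x0 y0 Hb Hab E5 E0 B5).
  rewrite <- V0 in W0, W5. rewrite <- V1 in W0, W1. rewrite <- V2 in W1, W2.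
  rewrite <- V3 in W2, W3. rewrite <- V4 in W3, W4. rewrite <- V5 in W4, W5.
  assert (HX : x0*x1 + x1*x2 + x2*x3 + x3*x4 + x4*x5 + x5*x0 = 2*(a^3*(a-2*b)/(a-b)^2)) by nra.
  rewrite C0, C1, C2, C3, C4, C5, L0, L1, L2, L3, L4, L5.
  split.
  - assert (Y0 : y0*y1 = b^3*(x0*x1/a^3 - 1/(a-b))) by (rewrite <- B0; field; lra).
    assert (Y1 : y1*y2 = b^3*(x1*x2/a^3 - 1/(a-b))) by (rewrite <- B1; field; lra).
    assert (Y2 : y2*y3 = b^3*(x2*x3/a^3 - 1/(a-b))) by (rewrite <- B2; field; lra).
    assert (Y3 : y3*y4 = b^3*(x3*x4/a^3 - 1/(a-b))) by (rewrite <- B3; field; lra).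
    assert (Y4 : y4*y5 = b^3*(x4*x5/a^3 - 1/(a-b))) by (rewrite <- B4; field; lra).
    assert (Y5 : y5*y0 = b^3*(x5*x0/a^3 - 1/(a-b))) by (rewrite <- B5; field; lra).
    rewrite Y0, Y1, Y2, Y3, Y4, Y5.
    assert (X5 : x5*x0 = 2*(a^3*(a-2*b)/(a-b)^2) - (x0*x1 + x1*x2 + x2*x3 + x3*x4 + x4*x5)) by lra.
    rewrite X5. field. lra.
  - set (c5 := (a ^ 2 + b ^ 2 - (a ^ 2 - b ^ 2) * (x5 * x0 / a ^ 2 - y5 * y0 / b ^ 2)) / (2 * (a - b) ^ 2)) in *.
    clearbody c5.
    assert (JJ : / 2 * dot (grad_f a b (x0, y0))
      ((fst (x0, y0) - fst (x5, y5)) / (2 * (a - b) * c5), (snd (x0, y0) - snd (x5, y5)) / (2 * (a - b) * c5)) = 1/(a-b)).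
    { unfold dot, grad_f; cbn [fst snd].
      replace (/ 2 * (2 * x0 / a ^ 2 * ((x0 - x5) / (2 * (a - b) * c5)) + 2 * y0 / b ^ 2 * ((y0 - y5) / (2 * (a - b) * c5))))
        with (((x0^2/a^2+y0^2/b^2) - x5*x0/a^2 - y5*y0/b^2)/(2*(a-b)*c5)) by (field; repeat split; lra).
      assert (E0' : x0^2/a^2+y0^2/b^2 = 1) by (simpl; exact E0). rewrite E0'. replace (1 - x5 * x0 / a ^ 2 - y5 * y0 / b ^ 2) with (2*c5) by (rewrite <- J5; ring).
      field. split; lra. }
    rewrite JJ. field. lra.
Qed.
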